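(* Let $F$ be a finite field of characteristic $3$. Let $k\ge 0$ be an integer, $m=3k+1$, and $t$ an integer with $t^3\equiv 1\pmod m$ and $\gcd(m,t-1)=1$. Let $G=T_{3m}=\langle x,y\mid x^m=y^3=1,\ y^{-1}xy=x^t\rangle$ (of order $3m$), $FG$ its group algebra, and $H=\langle x\rangle$. Let $\mathcal{C}_1,\dots,\mathcal{C}_k$ be the conjugacy classes of $G$ contained in $\langle x\rangle\setminus\{1\}$ (there are exactly $k$ of them, each of the form $\{x^j,x^{jt},x^{jt^2}\}$), and let $\hat{\mathcal{C}}_i=\sum_{g\in\mathcal{C}_i}g\in FG$. Then $Z(\Delta(G,H))$ equals the $F$-linear span of $\hat{\mathcal{C}}_1,\dots,\hat{\mathcal{C}}_k$.
   Context: $\Delta(G,H)$ is the ideal of $FG$ generated by $\{h-1\mid h\in H\}$; $Z(R)$ denotes the center of a ring $R$. *)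

(* Defs.v *)
From HB Require Import structures.
From mathcomp Require Import all_boot all_order all_algebra all_fingroup all_field.
Set Implicit Arguments. Unset Strict Implicit. Unset Printing Implicit Defensive.
Import GRing.Theory.
Local Open Scope ring_scope.

(* Group algebra F[gT] of a finite group type gT over a ring F:
   elements are finitely supported functions gT -> F, i.e. {ffun gT -> F}
   (with its pointwise F-module structure); the algebra product is the
   convolution [gamul] below (NOT the pointwise product of ffun). *)
Notation galg F gT := {ffun gT -> F} (only parsing).
Section GroupAlgebra.
Variables (F : comNzRingType) (gT : finGroupType).

Local Notation galg := {ffun gT -> F}.

Definition gamul (a b : galg) : galg :=
  [ffun g => \sum_(h : gT) a h * b (h^-1 * g)%g].

Definition gelt (g : gT) : galg := [ffun h => (h == g)%:R].

(* Delta(G,H): the two-sided ideal of FG generated by {h - 1 | h in H} *)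
Definition augIdeal (H : {set gT}) (a : galg) : Prop :=
  exists n (u v : 'I_n -> galg) (hs : 'I_n -> gT),
    (forall i, hs i \in H) /\
    a = \sum_(i < n) gamul (gamul (u i) (gelt (hs i) - gelt 1%g)) (v i).

Definition augCenter (H : {set gT}) (z : galg) : Prop :=
  augIdeal H z /\ forall a, augIdeal H a -> gamul z a = gamul a z.

Definition gascale (c : F) (a : galg) : galg := [ffun g => c * a g].

Definition classSum (C : {set gT}) : galg := [ffun g => (g \in C)%:R].

End GroupAlgebra.

(* Main.v *)
Require Import Defs.
From HB Require Import structures.
From mathcomp Require Import all_boot all_order all_algebra all_fingroup all_field.
From mathcomp Require Import cyclic.
Import GRing.Theory.
Set Implicit Arguments. Unset Strict Implicit. Unset Printing Implicit Defensive.
Local Open Scope ring_scope.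

Lemma gamul_geltl (F : comNzRingType) (gT : finGroupType) (a : gT) (z : {ffun gT -> F}) :
  gamul (gelt F a) z = [ffun g => z (a^-1 * g)%g].
Proof.
apply/ffunP => g; rewrite !ffunE (bigD1 a) //= big1 => [|h hna].
  by rewrite ffunE eqxx mul1r addr0.
by rewrite ffunE (negbTE hna) mul0r.
Qed.

Lemma gamul_geltr (F : comNzRingType) (gT : finGroupType) (a : gT) (z : {ffun gT -> F}) :
  gamul z (gelt F a) = [ffun g => z (g * a^-1)%g].
Proof.
apply/ffunP => g; rewrite !ffunE (bigD1 (g * a^-1)%g) //= big1 => [|h hna].
  by rewrite ffunE invMg invgK mulgKV eqxx mulr1 addr0.
rewrite ffunE; case: eqP => [e|]; last by rewrite mulr0.
by case/eqP: hna; rewrite -e invMg invgK mulgA mulgV mul1g.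
Qed.

Lemma gamulBr (F : comNzRingType) (gT : finGroupType) (a b c : {ffun gT -> F}) :
  gamul a (b - c) = gamul a b - gamul a c.
Proof.
apply/ffunP => g; rewrite !ffunE -sumrB; apply: eq_bigr => h _.
by rewrite !ffunE mulrBr.
Qed.

Lemma gamulBl (F : comNzRingType) (gT : finGroupType) (a b c : {ffun gT -> F}) :
  gamul (b - c) a = gamul b a - gamul c a.
Proof.
apply/ffunP => g; rewrite !ffunE -sumrB; apply: eq_bigr => h _.
by rewrite !ffunE mulrBl.
Qed.

Lemma gelt1l (F : comNzRingType) (gT : finGroupType) (z : {ffun gT -> F}) :
  gamul (gelt F 1%g) z = z.
Proof. by rewrite gamul_geltl; apply/ffunP => g; rewrite ffunE invg1 mul1g. Qed.

Lemma gelt1r (F : comNzRingType) (gT : finGroupType) (z : {ffun gT -> F}) :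
  gamul z (gelt F 1%g) = z.
Proof. by rewrite gamul_geltr; apply/ffunP => g; rewrite ffunE invg1 mulg1. Qed.

Lemma gelt_mul (F : comNzRingType) (gT : finGroupType) (a b : gT) :
  gamul (gelt F a) (gelt F b) = gelt F (a * b)%g.
Proof.
rewrite gamul_geltl; apply/ffunP => g; rewrite !ffunE.
by rewrite -(inj_eq (mulgI a)) mulKVg.
Qed.

Lemma gamul_scale1 (F : comNzRingType) (gT : finGroupType) (c : F) (w : {ffun gT -> F}) :
  gamul (gascale c (gelt F 1%g)) w = gascale c w.
Proof.
apply/ffunP => g; rewrite !ffunE (bigD1 1%g) //= big1 => [|h hna].
  by rewrite !ffunE eqxx mulr1 invg1 mul1g addr0.
by rewrite !ffunE (negbTE hna) mulr0 mul0r.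
Qed.

Lemma augIdeal_K (F : comNzRingType) (gT : finGroupType) (H : {group gT})
  (nH : forall a : gT, a \in 'N(H)%g) (a : {ffun gT -> F}) :
  augIdeal H a -> forall g, \sum_(h in H) a (h * g)%g = 0.
Proof.
case=> n [u [v [hs [hsH ->]]]] g.
under eq_bigr do rewrite sum_ffunE.
rewrite exchange_big big1 // => i _.
set w := gamul (u i) _.
have Kw' : forall q, \sum_(h in H) w (q * h)%g = 0.
  move=> q; rewrite /w gamulBr gamul_geltr gelt1r.
  under eq_bigr do rewrite !ffunE.
  rewrite sumrB [X in _ - X](reindex_inj (mulIg (hs i)^-1)%g) /=.
  rewrite [X in _ - X](eq_bigl (fun j => j \in H)) => [|j]; last by rewrite groupMr // groupV.
  by under [X in _ - X]eq_bigr do rewrite mulgA; rewrite subrr.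
have Kw : forall q, \sum_(h in H) w (h * q)%g = 0.
  move=> q; rewrite -[RHS](Kw' q) [RHS](reindex_inj (conjg_inj q)%g) /=.
  rewrite [RHS](eq_bigl (fun j => j \in H)) => [|j]; last by rewrite memJ_norm.
  apply: eq_bigr => j _; congr (w _).
  by rewrite conjgE !mulgA mulgV mul1g.
under eq_bigr => h _.
  rewrite ffunE (reindex_inj (mulgI h)) /=.
  under eq_bigr do rewrite invMg -mulgA mulKg.
over.
rewrite exchange_big big1 // => b _.
by rewrite -mulr_suml Kw mul0r.
Qed.

Lemma K_aHb (F : comNzRingType) (gT : finGroupType) (H : {group gT})
  (nH : forall a : gT, a \in 'N(H)%g) (z : {ffun gT -> F}) :
  (forall g, \sum_(h in H) z (h * g)%g = 0) ->
  forall a b, \sum_(h in H) z (a * h * b)%g = 0.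
Proof.
move=> K a b; rewrite -[RHS](K (a * b)%g) [RHS](reindex_inj (conjg_inj a^-1)%g) /=.
rewrite [RHS](eq_bigl (fun j => j \in H)) => [|j]; last by rewrite memJ_norm.
apply: eq_bigr => j _; congr (z _).
by rewrite conjgE invgK !mulgA mulgKV.
Qed.

Lemma K_aHVb (F : comNzRingType) (gT : finGroupType) (H : {group gT})
  (nH : forall a : gT, a \in 'N(H)%g) (z : {ffun gT -> F}) :
  (forall g, \sum_(h in H) z (h * g)%g = 0) ->
  forall a b, \sum_(h in H) z (a * h^-1 * b)%g = 0.
Proof.
move=> K a b; rewrite -[RHS](K_aHb nH K a b) [RHS](reindex_inj invg_inj) /=.
by rewrite [RHS](eq_bigl (fun j => j \in H)) => [|j]; [|rewrite groupV].
Qed.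
Local Open Scope group_scope.


Lemma normH (gT : finGroupType) (k t : nat) (x y : gT) :
  <<[set x; y]>> = [set: gT] -> x ^ y = x ^+ t ->
  forall a : gT, a \in 'N(<[x]>).
Proof.
move=> gen xy.
have: [set: gT] \subset 'N(<[x]>).
  rewrite -gen gen_subG; apply/subsetP => w; rewrite !inE => /orP [] /eqP ->.
    by rewrite -cycleJ conjgE mulKg subxx.
  by rewrite -cycleJ xy cycleX.

by move=> /subsetP sN a; apply: sN; rewrite inE.
Qed.

Lemma fpf (gT : finGroupType) (k t : nat) (x y : gT) :
  coprime (3 * k + 1) (t - 1) -> x ^+ (3 * k + 1) = 1 -> x ^ y = x ^+ t ->
  forall w, w \in <[x]> -> w ^ y = w -> w = 1.
Proof.
move=> cop xm xy w /cycleP [j ->] e.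
rewrite conjXg xy -expgM in e.
case: t cop xy e => [|t'] cop xy e.
  move: cop; rewrite sub0n /coprime gcdn0 => /eqP m1.
  by rewrite m1 expg1 in xm; rewrite xm expg1n.
rewrite mulSn expgD in e.
have e1 : x ^+ (t' * j) = 1.
  by apply: (mulgI (x ^+ j)); rewrite mulg1.
apply/eqP; rewrite -order_dvdn.
have om : (#[x] %| 3 * k + 1)%N by rewrite order_dvdn xm.
have co : coprime #[x] t' by move: cop; rewrite subn1 /= => cop; exact: coprime_dvdl om cop.
by rewrite -(Gauss_dvdr _ co) order_dvdn e1.
Qed.

Lemma decomp (gT : finGroupType) (t : nat) (x y : gT) :
  <<[set x; y]>> = [set: gT] -> x ^ y = x ^+ t -> y ^+ 3 = 1 ->
  forall g : gT, exists h b, [/\ h \in <[x]>, (b < 3)%N & g = h * y ^+ b].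
Proof.
move=> gen xy y3 g.
have nH := normH 0 gen xy.
have J : <[x]> <*> <[y]> = <[x]> * <[y]>.
  by apply: norm_joinEr; rewrite cycle_subG nH.
have : g \in <[x]> <*> <[y]>.
  have: [set: gT] \subset <[x]> <*> <[y]>.
    rewrite -gen gen_subG; apply/subsetP => w; rewrite !inE => /orP [] /eqP ->.
      exact: (subsetP (joing_subl _ _)) _ (cycle_id x).
    exact: (subsetP (joing_subr _ _)) _ (cycle_id y).
  by move/subsetP; apply; rewrite inE.
rewrite J => /mulsgP [h c hH /cycleP [i ->] ->].
by exists h, (i %% 3)%N; split => //; [rewrite ltn_mod | rewrite (expg_mod _ y3)].
Qed.

Lemma conj_comm (gT : finGroupType) (a b : gT) : commute a b -> a ^ b = a.
Proof. by move=> c; rewrite conjgE c mulKg. Qed.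

Lemma fpf2 (gT : finGroupType) (k t : nat) (x y : gT) :
  <<[set x; y]>> = [set: gT] ->
  coprime (3 * k + 1) (t - 1) -> x ^+ (3 * k + 1) = 1 -> y ^+ 3 = 1 -> x ^ y = x ^+ t ->
  forall w a, w \in <[x]> -> a \notin <[x]> -> w ^ a = w -> w = 1.
Proof.
move=> gen cop xm y3 xy w a wH aH.
have [h [b [hH b3 ea]]] := decomp gen xy y3 a; subst a.
have wh : w ^ h = w.
  apply: conj_comm; case/cycleP: wH => i ->; case/cycleP: hH => j ->.
  exact: commuteX2.
rewrite conjgM wh => e.
apply: (fpf cop xm xy wH).
case: b b3 e aH => [|[|[|]]] // _ e aH.
- by rewrite expg0 mulg1 hH in aH.
- by rewrite -{1}e -conjgM -expgSr y3 conjg1.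
Qed.

Lemma conj_coset (gT : finGroupType) (k t : nat) (x y : gT) :
  <<[set x; y]>> = [set: gT] ->
  coprime (3 * k + 1) (t - 1) -> x ^+ (3 * k + 1) = 1 -> y ^+ 3 = 1 -> x ^ y = x ^+ t ->
  forall g h, g \notin <[x]> -> h \in <[x]> -> exists v, h * g = g ^ v.
Proof.
move=> gen cop xm y3 xy g h gH hH.
have nH := normH k gen xy.
pose psi v := v^-1 * v ^ g^-1.
have psiH : forall v, v \in <[x]> -> psi v \in <[x]>.
  by move=> v vH; rewrite groupM ?groupV // memJ_norm.
have inj : {in <[x]> &, injective psi}.
  move=> v1 v2 v1H v2H e.
  have e2 : v2 ^ g^-1 = v2 * v1^-1 * v1 ^ g^-1 by rewrite -mulgA [_ * v1 ^ _]e mulKVg.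
  have fx : (v2 * v1^-1) ^ g^-1 = v2 * v1^-1.
    by rewrite conjMg conjVg e2 mulgK.
  have := fpf2 gen cop xm y3 xy (groupM v2H (groupVr v1H)) _ fx.
  rewrite groupV => /(_ gH) /eqP; rewrite -eq_mulgV1 => /eqP ->; done.
have im : psi @: <[x]> = <[x]>.
  apply/eqP; rewrite eqEcard card_in_imset // leqnn andbT.
  by apply/subsetP => q /imsetP [v vH ->]; exact: psiH.
move: hH; rewrite -im => /imsetP [v _ ->].
exists v; rewrite /psi conjgE invgK !mulgA mulgKV conjgE.
by rewrite !mulgA.
Qed.

Local Close Scope group_scope.
Local Open Scope ring_scope.

Lemma card_orb (gT : finGroupType) (k t : nat) (x y : gT) :
  coprime (3 * k + 1) (t - 1) -> (x ^+ (3 * k + 1) = 1)%g -> (y ^+ 3 = 1)%g -> (x ^ y = x ^+ t)%g ->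
  forall h, h \in (<[x]>^#)%g -> #|(h ^: <[y]>)%g| = 3%N.
Proof.
move=> cop xm y3 xy h; rewrite in_setD1 => /andP [h1 hH].
have d3 : (#|(h ^: <[y]>)%g| %| 3)%N.
  rewrite -index_cent1; apply: dvdn_trans (dvdn_indexg _ _) _.
  by rewrite order_dvdn y3.
have n1 : #|(h ^: <[y]>)%g| != 1%N.
  apply/negP => /cards1P [c ec].
  have h1' := class_refl <[y]>%G h.
  have h2 : (h ^ y)%g \in (h ^: <[y]>)%g by apply: memJ_class; exact: cycle_id.
  rewrite ec inE in h1'; rewrite ec inE in h2.
  move/eqP: h1' => hc; move/eqP: h2; rewrite -hc => e.
  by move: h1; rewrite (fpf cop xm xy hH e) eqxx.
have n0 : (0 < #|(h ^: <[y]>)%g|)%N by apply/card_gt0P; exists h; exact: class_refl.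
have := dvdn_leq (isT : (0 < 3)%N) d3; move: d3 n1 n0.
by case: #|_| => [|[|[|[|]]]].
Qed.

Lemma orbit_sum (F : fieldType) (gT : finGroupType) (k t : nat) (x y : gT) :
  <<[set x; y]>>%g = [set: gT] ->
  coprime (3 * k + 1) (t - 1) -> (x ^+ (3 * k + 1) = 1)%g -> (y ^+ 3 = 1)%g -> (x ^ y = x ^+ t)%g ->
  3%N \in [pchar F] ->
  forall f : gT -> F, (forall h a, f (h ^ a)%g = f h) ->
  \sum_(h in (<[x]>^#)%g) f h = 0.
Proof.
move=> gen cop xm y3 xy p3 f inv.
have nH := normH k gen xy.
rewrite (partition_big_imset (fun h => h ^: <[y]>)%g) /=.
apply: big1 => B /imsetP [h0 h0S ->].
rewrite (eq_bigl (fun i => i \in (h0 ^: <[y]>)%g)) => [|i].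
  rewrite (eq_bigr (fun _ => f h0)) => [|i /imsetP [a _ ->]]; last exact: inv.
  by rewrite sumr_const (card_orb cop xm y3 xy h0S) -mulr_natr pcharf0 // mulr0.
apply/andP/idP => [[_ /eqP <-]|iC]; first exact: class_refl.
split; last by apply/eqP/class_eqP.
move: iC h0S => /imsetP [a _ ->]; rewrite !in_setD1 conjg_eq1 => /andP [-> /=].
by rewrite memJ_norm.
Qed.

Lemma central_comm (F : comNzRingType) (gT : finGroupType) (z a : {ffun gT -> F}) :
  (forall g b, z (g ^ b)%g = z g) -> gamul z a = gamul a z.
Proof.
move=> inv; apply/ffunP => g; rewrite !ffunE.
rewrite (reindex_inj (h := fun h => g * h^-1)%g); last first.
  by move=> h1 h2 /mulgI /invg_inj.
apply: eq_bigr => u _ /=.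
rewrite invMg invgK mulgKV mulrC; congr (_ * _).
by rewrite -(inv (u^-1 * g) u^-1)%g conjgE invgK !mulgA mulgV mul1g.
Qed.

Unset Implicit Arguments.
Theorem proposition3p12 (F : finFieldType) (gT : finGroupType)
    (k t : nat) (x y : gT) :
  3 \in [pchar F] ->
  (t ^ 3 == 1 %[mod (3 * k + 1)])%N ->
  coprime (3 * k + 1) (t - 1) ->
  <<[set x; y]>>%g = [set: gT] ->
  (x ^+ (3 * k + 1))%g = 1%g ->
  (y ^+ 3)%g = 1%g ->
  (x ^ y)%g = (x ^+ t)%g ->
  #|gT| = (3 * (3 * k + 1))%N ->
  forall z : galg F gT,
    augCenter <[x]>%g z <->
    exists c : {set gT} -> F,
      z = \sum_(C in classes [set: gT] | C \subset (<[x]>^#)%g)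
            gascale (c C) (classSum F C).
Proof.
move=> p3 _ cop gen xm y3 xy _ z.
have nH := normH k gen xy.
have nz : (#|<[x]>%g|%:R : F) != 0.
  rewrite -(dvdn_pcharf p3); apply/negP => d3.
  have : (3 %| 3 * k + 1)%N by apply: dvdn_trans d3 _; rewrite order_dvdn xm.
  by rewrite dvdn_addr ?dvdn_mulr.
have osum := orbit_sum gen cop xm y3 xy p3.
split.
  case=> zI zC.
  have K := augIdeal_K nH zI.
  have commx : forall g, z (g * x^-1)%g = z (x^-1 * g)%g.
    have I1 : augIdeal <[x]>%g (gelt F x - gelt F 1%g).
      exists 1%N, (fun _ => gelt F 1%g), (fun _ => gelt F 1%g), (fun _ => x).
      split => [_|]; first exact: cycle_id.
      by rewrite big_ord1 gelt1l gelt1r.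
    move=> g; have := congr1 (fun f : {ffun gT -> F} => f g) (zC _ I1).
    rewrite gamulBr gamulBl gamul_geltr gamul_geltl gelt1r gelt1l !ffunE.
    by move/(addIr (- z g)).
  have commy : forall g, z (g * y^-1)%g = z (y^-1 * g)%g.
    move=> g.
    have eh : forall h, h \in <[x]>%g ->
        z (g * (h * y)^-1)%g - z (g * y^-1)%g = z ((h * y)^-1 * g)%g - z (y^-1 * g)%g.
      move=> h hH.
      have Ih : augIdeal <[x]>%g (gelt F (h * y)%g - gelt F y).
        exists 1%N, (fun _ => gelt F 1%g), (fun _ => gelt F y), (fun _ => h).
        split => //.
        by rewrite big_ord1 gelt1l gamulBl !gelt_mul mul1g.
      have := congr1 (fun f : {ffun gT -> F} => f g) (zC _ Ih).
      by rewrite !gamulBr !gamulBl !gamul_geltr !gamul_geltl !ffunE.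
    have S : \sum_(h in <[x]>%g) (z (g * (h * y)^-1)%g - z (g * y^-1)%g) =
             \sum_(h in <[x]>%g) (z ((h * y)^-1 * g)%g - z (y^-1 * g)%g) := eq_bigr _ eh.
    rewrite !sumrB !sumr_const in S.
    have s1 : \sum_(h in <[x]>%g) z (g * (h * y)^-1)%g = 0.
      rewrite -[RHS](K_aHVb nH K (g * y^-1)%g 1%g); apply: eq_bigr => h _.
      by rewrite invMg mulgA mulg1.
    have s2 : \sum_(h in <[x]>%g) z ((h * y)^-1 * g)%g = 0.
      rewrite -[RHS](K_aHVb nH K y^-1 g); apply: eq_bigr => h _.
      by rewrite invMg.
    rewrite s1 s2 !sub0r in S. move/oppr_inj: S.
    by move=> e; apply: (mulIf nz); rewrite !mulr_natr.
  have cinv : forall g a, z (g ^ a)%g = z g.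
    pose S := [set a : gT | [forall g, z (g ^ a)%g == z g]].
    have gS : group_set S.
      apply/group_setP; split.
        by rewrite inE; apply/forallP => g; rewrite conjg1.
      move=> a b; rewrite !inE => /forallP Ha /forallP Hb.
      by apply/forallP => g; rewrite conjgM (eqP (Hb _)) (eqP (Ha _)).
    have : [set: gT] \subset Group gS.
      rewrite -gen gen_subG; apply/subsetP => w; rewrite !inE => /orP [] /eqP ->.
        by apply/forallP => g; rewrite conjgE -commx mulgK.
      by apply/forallP => g; rewrite conjgE -commy mulgK.
    move=> /subsetP sS g a.
    by have := sS a (in_setT a); rewrite inE => /forallP /(_ g) /eqP.
  have zout : forall g, g \notin <[x]>%g -> z g = 0.
    move=> g gH; have := K g.
    rewrite (eq_bigr (fun _ => z g)) => [|h hH].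
      rewrite sumr_const => /eqP; rewrite -mulr_natr mulf_eq0 (negbTE nz) orbF.
      by move/eqP.
    have [v ->] := conj_coset gen cop xm y3 xy gH hH.
    exact: cinv.
  have z1 : z 1%g = 0.
    have := K 1%g; rewrite (bigD1 1%g) //= mulg1.
    rewrite (eq_bigl (fun h => h \in (<[x]>^#)%g)) => [|h]; last by rewrite in_setD1 andbC.
    under eq_bigr do rewrite mulg1.
    by rewrite (osum z cinv) addr0.
  exists (fun C => z (repr C)).
  apply/ffunP => g; rewrite sum_ffunE.
  under eq_bigr do rewrite !ffunE.
  case: (boolP (g \in (<[x]>^#)%g)) => gS.
    have cS : (g ^: [set: gT])%g \subset (<[x]>^#)%g.
      apply/subsetP => q /imsetP [a _ ->].
      by move: gS; rewrite !in_setD1 conjg_eq1 memJ_norm.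
    rewrite (bigD1 (g ^: [set: gT])%g) /=; last by rewrite mem_classes ?inE.
    rewrite big1 => [|C /andP [/andP [/imsetP [b _ ->] _] neq]].
      rewrite class_refl mulr1 addr0.
      have := @mem_repr _ (g ^: [set: gT])%g g (class_refl [set: gT]%G g).
      by case/imsetP => a _ ->; rewrite cinv.
    case: (boolP (g \in (b ^: [set: gT])%g)) => gC; last by rewrite mulr0.
    by move/class_eqP: gC => e; rewrite e eqxx in neq.
  rewrite big1 => [|C /andP [_ sub]]; last first.
    by rewrite (contraNF (subsetP sub g)) // mulr0.
  move: gS; rewrite in_setD1 negb_and negbK.
  case: (boolP (g \in <[x]>%g)) => gH; last by rewrite zout.
  by rewrite orbF => /eqP ->.
case=> c ->.
set w := \sum_(C in _ | _) _.
have zE : forall g, w g = \sum_(C in classes [set: gT] | C \subset (<[x]>^#)%g)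
    c C * (g \in C)%:R.
  by move=> g; rewrite /w sum_ffunE; apply: eq_bigr => C _; rewrite !ffunE.
have cinv : forall g a, w (g ^ a)%g = w g.
  move=> g a; rewrite !zE; apply: eq_bigr => C /andP [/imsetP [b _ ->] _].
  by rewrite memJ_norm // (subsetP (class_norm b [set: gT]%G)) ?inE.
have zout : forall g, g \notin (<[x]>^#)%g -> w g = 0.
  move=> g gS; rewrite zE big1 // => C /andP [_ sub].
  by rewrite (contraNF (subsetP sub g)) // mulr0.
split; last by move=> a _; exact: central_comm.
clearbody w.
pose hs g := if g \in <[x]>%g then g else 1%g.
exists #|gT|, (fun i => gascale (w (enum_val i)) (gelt F 1%g)), (fun _ => gelt F 1%g),
  (fun i => hs (enum_val i)).
split => [i|]; first by rewrite /hs; case: ifP.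
under eq_bigr do rewrite gelt1r gamul_scale1.
rewrite -(big_enum_val (fun g => gascale (w g) (gelt F (hs g) - gelt F 1%g))).
apply/ffunP => q; rewrite sum_ffunE.
under eq_bigr do rewrite !ffunE mulrBr.
rewrite sumrB.
have tot : \sum_(g in gT) w g * (q == 1%g)%:R = 0.
  rewrite -mulr_suml (bigID (fun g => g \in (<[x]>^#)%g)) /=.
  rewrite [X in _ + X]big1 => [|g /zout] //.
  by rewrite addr0 osum ?mul0r.
rewrite tot subr0.
rewrite (eq_bigr (fun g => w g * (q == g)%:R)) => [|g _]; last first.
  case: (boolP (g \in (<[x]>^#)%g)) => gS; last by rewrite zout // !mul0r.
  by move: gS; rewrite in_setD1 /hs => /andP [_ ->].
rewrite (bigD1 q) //= eqxx mulr1 big1 ?addr0 // => g ngq.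
by rewrite eq_sym (negbTE ngq) mulr0.
Qed.
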